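(* Let $H$ be a complex Hilbert space, $A\in B(H)$ a nonzero positive semidefinite operator with closed range, and $T\in B_{A^{1/2}}(H)$. Then every $\lambda\in\mathbb C$ with $|\lambda|>\|T\|_A$ belongs to $\rho_A(T)$.
   Context: $\|x\|_A=\langle Ax,x\rangle^{1/2}$. For $S\in B(H)$, $\|S\|_A=\sup\{\|Sx\|_A : x\in\overline{R(A)},\ \|x\|_A=1\}$. $B_{A^{1/2}}(H)=\{S\in B(H): R(S^*A^{1/2})\subset R(A^{1/2})\}$. $S\in B_{A^{1/2}}(H)$ is $A$-invertible in $B_{A^{1/2}}(H)$ if there is a nonzero $R\in B_{A^{1/2}}(H)$ with $ASR=ARS=A$; $\rho_A(S)=\{\lambda\in\mathbb C:\lambda I-S$ is $A$-invertible in $B_{A^{1/2}}(H)\}$. *)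

(* Defs.v *)
From HB Require Import structures.
From mathcomp Require Import all_boot all_order all_algebra.
From mathcomp Require Import classical_sets reals.
From mathcomp Require Import complex.
Set Implicit Arguments. Unset Strict Implicit. Unset Printing Implicit Defensive.
Import Order.TTheory GRing.Theory Num.Theory.
Local Open Scope ring_scope.

Section Hilbert.
Variables (R : realType) (V : lmodType R[i]) (ip : V -> V -> R[i]).

Definition inner_product : Prop :=
  [/\ (forall (a : R[i]) (x y z : V), ip (a *: x + y) z = a * ip x z + ip y z),
      (forall x y : V, ip y x = (ip x y)^*),
      (forall x : V, 0 <= ip x x) &
      (forall x : V, ip x x = 0 -> x = 0)].

Definition hnorm (x : V) : R := Num.sqrt (complex.Re (ip x x)).

Definition hconv (u : nat -> V) (l : V) : Prop :=
  forall e : R, 0 < e -> exists N : nat, forall n, (N <= n)%N -> hnorm (u n - l) < e.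

Definition hcauchy (u : nat -> V) : Prop :=
  forall e : R, 0 < e -> exists N : nat,
    forall m n, (N <= m)%N -> (N <= n)%N -> hnorm (u m - u n) < e.

Definition hcomplete : Prop := forall u, hcauchy u -> exists l, hconv u l.

Definition hilbert : Prop := inner_product /\ hcomplete.

Definition lin_op (S : V -> V) : Prop :=
  forall (a : R[i]) (x y : V), S (a *: x + y) = a *: S x + S y.

Definition bounded_op (S : V -> V) : Prop :=
  lin_op S /\ exists M : R, forall x, hnorm (S x) <= M * hnorm x.

Definition positive_op (A : V -> V) : Prop := forall x, 0 <= ip (A x) x.

Definition nonzero_op (S : V -> V) : Prop := exists x, S x != 0.


Definition hclosed (P : set V) : Prop :=
  forall u l, (forall n, P (u n)) -> hconv u l -> P l.

Definition hclosure (P : set V) : set V :=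
  [set x | exists u, (forall n, P (u n)) /\ hconv u x].

Definition is_adjoint (S S' : V -> V) : Prop :=
  forall x y, ip (S x) y = ip x (S' y).

Definition is_pos_sqrt (A B : V -> V) : Prop :=
  [/\ bounded_op B, positive_op B & forall x, B (B x) = A x].

Definition Anorm (A : V -> V) (x : V) : R := Num.sqrt (complex.Re (ip (A x) x)).

Definition Aopnorm (A S : V -> V) : R :=
  sup [set r | exists x, [/\ hclosure (range A) x, Anorm A x = 1 & r = Anorm A (S x)]].

Definition in_BAhalf (B S : V -> V) : Prop :=
  bounded_op S /\
  exists S', is_adjoint S S' /\ (range (fun x => S' (B x)) `<=` range B)%classic.

Definition A_invertible (A B S : V -> V) : Prop :=
  exists Rop : V -> V, [/\ nonzero_op Rop, in_BAhalf B Rop,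
     (forall x, A (S (Rop x)) = A x) & (forall x, A (Rop (S x)) = A x)].

Definition rhoA (A B S : V -> V) : set R[i] :=
  [set lam | A_invertible A B (fun x => lam *: x - S x)].

End Hilbert.

(* Main.v *)
Require Import Defs.
From HB Require Import structures.
From mathcomp Require Import all_boot all_order all_algebra.
From mathcomp Require Import boolp classical_sets reals.
From mathcomp Require Import complex.
From mathcomp Require Import ring lra.
Set Implicit Arguments. Unset Strict Implicit. Unset Printing Implicit Defensive.
Import Order.TTheory GRing.Theory Num.Theory.
Local Open Scope complex_scope.
Local Open Scope ring_scope.

Local Notation Rc := complex.Re.
Local Notation Ic := complex.Im.
Section ComplexHelp.
Variable R : realType.
Implicit Types (x y z : R[i]) (r : R).

Lemma ReD x y : Rc (x + y) = Rc x + Rc y. Proof. by case: x => a b; case: y => c d. Qed.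
Lemma ImD x y : Ic (x + y) = Ic x + Ic y. Proof. by case: x => a b; case: y => c d. Qed.
Lemma ReN x : Rc (- x) = - Rc x. Proof. by case: x => a b. Qed.
Lemma ImN x : Ic (- x) = - Ic x. Proof. by case: x => a b. Qed.
Lemma ReB x y : Rc (x - y) = Rc x - Rc y. Proof. by rewrite ReD ReN. Qed.
Lemma ReM x y : Rc (x * y) = Rc x * Rc y - Ic x * Ic y. Proof. by case: x => a b; case: y => c d. Qed.
Lemma ImM x y : Ic (x * y) = Rc x * Ic y + Ic x * Rc y. Proof. by case: x => a b; case: y => c d /=. Qed.
Lemma ReC r : Rc (r%:C) = r. Proof. by []. Qed.
Lemma ImC r : Ic (r%:C) = 0. Proof. by []. Qed.
Lemma ReJ x : Rc (x^*) = Rc x. Proof. by case: x => a b. Qed.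
Lemma ImJ x : Ic (x^*) = - Ic x. Proof. by case: x => a b. Qed.
Lemma Re0 : Rc (0 : R[i]) = 0. Proof. by []. Qed.
Lemma Re1 : Rc (1 : R[i]) = 1. Proof. by []. Qed.
Lemma ReMC r x : Rc (r%:C * x) = r * Rc x.
Proof. by rewrite ReM ReC ImC mul0r subr0. Qed.
Lemma ImMC r x : Ic (r%:C * x) = r * Ic x.
Proof. by rewrite ImM ReC ImC mul0r addr0. Qed.
Lemma ge0_realC x : 0 <= x -> x = (Rc x)%:C /\ 0 <= Rc x.
Proof.
rewrite lecE => /andP[/eqP h1 h2]; split => //.
by case: x h1 h2 => a b /= -> _.
Qed.
Lemma complex_ext x y : Rc x = Rc y -> Ic x = Ic y -> x = y.
Proof. by case: x; case: y => a b c d /= -> ->. Qed.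
Lemma mulJC x : x * x^* = (Rc x ^+ 2 + Ic x ^+ 2)%:C.
Proof. apply: complex_ext; rewrite ?ReM ?ImM ReJ ImJ /=; ring. Qed.

Lemma cjD x y : (x + y)^* = x^* + y^*. Proof. exact: rmorphD. Qed.
Lemma cjM x y : (x * y)^* = x^* * y^*. Proof. exact: rmorphM. Qed.
Lemma cjK x : (x^*)^* = x. Proof. exact: conjCK. Qed.
Lemma cjN x : (- x)^* = - x^*. Proof. exact: rmorphN. Qed.
Lemma cjC r : (r%:C)^* = r%:C. Proof. exact: conjc_real. Qed.
Lemma cj0 : (0 : R[i])^* = 0. Proof. exact: conjC0. Qed.
Lemma cjN1 : (-1 : R[i])^* = -1. Proof. exact: conjCN1. Qed.

Definition modc x : R := Num.sqrt (Rc x ^+ 2 + Ic x ^+ 2).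
Lemma modc_ge0 x : 0 <= modc x. Proof. exact: sqrtr_ge0. Qed.
Lemma normc_modc x : `|x| = (modc x)%:C.
Proof. by rewrite normc_def. Qed.
Lemma modcM x y : modc (x * y) = modc x * modc y.
Proof.
rewrite /modc -sqrtrM ?addr_ge0 ?sqr_ge0 //; congr Num.sqrt.
rewrite ReM ImM; ring.
Qed.
Lemma modcC r : modc (r%:C) = `|r|.
Proof. by rewrite /modc ReC ImC expr0n addr0 sqrtr_sqr. Qed.
Lemma modc_eq0 x : (modc x == 0) = (x == 0).
Proof.
rewrite /modc sqrtr_eq0 le_eqVlt ltNge addr_ge0 ?sqr_ge0 // orbF.
rewrite paddr_eq0 ?sqr_ge0 // !sqrf_eq0.
by case: x => a b; rewrite eq_complex /=.
Qed.
Lemma modcV x : modc (x^-1) = (modc x)^-1.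
Proof.
have [->|x0] := eqVneq x 0; first by rewrite invr0 /modc /= expr0n addr0 sqrtr0 invr0.
apply: (@mulfI _ (modc x)); first by rewrite modc_eq0.
by rewrite -modcM divff // mulfV ?modc_eq0 // /modc /= expr0n /= addr0 expr1n sqrtr1.
Qed.
Lemma modcN1 : modc (-1) = 1.
Proof. by rewrite /modc /= oppr0 expr0n addr0 sqrrN expr1n sqrtr1. Qed.
Lemma modcJ x : modc (x^*) = modc x.
Proof. by rewrite /modc ReJ ImJ sqrrN. Qed.
Lemma modc_sq x : modc x ^+ 2 = Rc x ^+ 2 + Ic x ^+ 2.
Proof. by rewrite /modc sqr_sqrtr // addr_ge0 ?sqr_ge0. Qed.
Lemma Re_le_modc x : Rc x <= modc x.
Proof.
have [h|h] := lerP (Rc x) 0; first exact: le_trans h (modc_ge0 x).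
rewrite -(ger0_norm (ltW h)) -sqrtr_sqr; apply: ler_wsqrtr.
by rewrite lerDl sqr_ge0.
Qed.
End ComplexHelp.

Section IP.
Variables (R : realType) (V : lmodType R[i]) (ip : V -> V -> R[i]).
Hypothesis Hip : inner_product ip.
Implicit Types (x y z : V) (a : R[i]).

Lemma ipDZl a x y z : ip (a *: x + y) z = a * ip x z + ip y z.
Proof. by case: Hip. Qed.
Lemma ipC x y : ip y x = (ip x y)^*.
Proof. by case: Hip. Qed.
Lemma ipxx_ge0 x : 0 <= ip x x.
Proof. by case: Hip. Qed.
Lemma ipxx_eq0 x : ip x x = 0 -> x = 0.
Proof. by case: Hip => _ _ _; apply. Qed.
Lemma ipDl x y z : ip (x + y) z = ip x z + ip y z.
Proof. by rewrite -[x]scale1r ipDZl mul1r scale1r. Qed.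
Lemma ip0l z : ip 0 z = 0.
Proof. by apply: (addrI (ip 0 z)); rewrite -ipDl !addr0. Qed.
Lemma ipZl a x z : ip (a *: x) z = a * ip x z.
Proof. by rewrite -[a *: x]addr0 ipDZl ip0l addr0. Qed.
Lemma ipNl x z : ip (- x) z = - ip x z.
Proof. by rewrite -scaleN1r ipZl mulN1r. Qed.
Lemma ipBl x y z : ip (x - y) z = ip x z - ip y z.
Proof. by rewrite ipDl ipNl. Qed.
Lemma ipDr x y z : ip x (y + z) = ip x y + ip x z.
Proof. by rewrite [LHS]ipC ipDl cjD (ipC x y) (ipC x z) !cjK. Qed.
Lemma ipZr a x y : ip x (a *: y) = a^* * ip x y.
Proof. by rewrite [LHS]ipC ipZl cjM (ipC x y) cjK. Qed.
Lemma ip0r x : ip x 0 = 0.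
Proof. by rewrite ipC ip0l cj0. Qed.
Lemma ipNr x y : ip x (- y) = - ip x y.
Proof. by rewrite -scaleN1r ipZr cjN1 mulN1r. Qed.
Lemma ipBr x y z : ip x (y - z) = ip x y - ip x z.
Proof. by rewrite ipDr ipNr. Qed.

Definition rn x : R := complex.Re (ip x x).
Lemma rn_ge0 x : 0 <= rn x.
Proof. by case: (ge0_realC (ipxx_ge0 x)). Qed.
Lemma ipxx_real x : ip x x = (rn x)%:C.
Proof. by case: (ge0_realC (ipxx_ge0 x)). Qed.
Lemma Re_ipC x y : complex.Re (ip y x) = complex.Re (ip x y).
Proof. by rewrite ipC ReJ. Qed.
Lemma rnD x y : rn (x + y) = rn x + 2 * complex.Re (ip x y) + rn y.
Proof.
rewrite /rn ipDl !ipDr !ReD (Re_ipC x y); ring.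
Qed.
Lemma rnZ a x : rn (a *: x) = modc a ^+ 2 * rn x.
Proof.
rewrite /rn ipZl ipZr mulrA mulJC -/(rn x) ipxx_real -rmorphM /= modc_sq //.
Qed.
Lemma rnN x : rn (- x) = rn x.
Proof. by rewrite -scaleN1r rnZ modcN1 expr1n mul1r. Qed.
Lemma rn_eq0 x : rn x = 0 -> x = 0.
Proof. by move=> h; apply: ipxx_eq0; rewrite ipxx_real h. Qed.

Lemma hnormE x : hnorm ip x = Num.sqrt (rn x). Proof. by []. Qed.
Lemma hnorm_ge0 x : 0 <= hnorm ip x. Proof. exact: sqrtr_ge0. Qed.
Lemma hnorm_sq x : hnorm ip x ^+ 2 = rn x.
Proof. by rewrite /hnorm sqr_sqrtr // rn_ge0. Qed.
Lemma hnorm_eq0 x : hnorm ip x = 0 -> x = 0.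
Proof. by move=> h; apply: rn_eq0; rewrite -hnorm_sq h expr0n. Qed.
Lemma hnorm0 : hnorm ip 0 = 0.
Proof. by rewrite /hnorm /rn ip0l /= sqrtr0. Qed.

Lemma CS_Re x y : complex.Re (ip x y) <= hnorm ip x * hnorm ip y.
Proof.
set p := complex.Re (ip x y).
have key : forall t : R, 0 <= rn x + 2 * t * p + t ^+ 2 * rn y.
  move=> t; have := rn_ge0 (x + t%:C *: y).
  by rewrite rnD rnZ ipZr cjC ReMC modcC -/p real_normK ?num_real // mulrA.
have [p0|pp] := lerP p 0; first by apply: le_trans p0 _; rewrite mulr_ge0 ?hnorm_ge0.
have hx := rn_ge0 x; have hy := rn_ge0 y.
have sq : p ^+ 2 <= rn x * rn y.
  have [y0|yp] := eqVneq (rn y) 0.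
    have := key (- (rn x + 1) / (2 * p)).
    have e : 2 * (- (rn x + 1) / (2 * p)) * p = - (rn x + 1).
      by field; rewrite gt_eqF.
    rewrite y0 mulr0 addr0 e; lra.
  have yp' : 0 < rn y by rewrite lt_def yp hy.
  have := key (- p / rn y).
  have e : rn x + 2 * (- p / rn y) * p + (- p / rn y) ^+ 2 * rn y
           = (rn x * rn y - p ^+ 2) / rn y.
    by field; rewrite gt_eqF.
  rewrite e pmulr_lge0 ?invr_gt0 //; lra.
rewrite -(ger0_norm (ltW pp)) -sqrtr_sqr /hnorm -sqrtrM //.
exact: ler_wsqrtr.
Qed.

Lemma hnormD x y : hnorm ip (x + y) <= hnorm ip x + hnorm ip y.
Proof.
have h := CS_Re x y.
rewrite -(ger0_norm (addr_ge0 (hnorm_ge0 x) (hnorm_ge0 y))) -sqrtr_sqr.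
rewrite [hnorm ip (x + y)]hnormE.
apply: ler_wsqrtr; rewrite rnD -!hnorm_sq; nra.
Qed.

Lemma hnormZ a x : hnorm ip (a *: x) = modc a * hnorm ip x.
Proof.
rewrite !hnormE rnZ sqrtrM ?sqr_ge0 // sqrtr_sqr ger0_norm //; exact: modc_ge0.
Qed.
Lemma hnormN x : hnorm ip (- x) = hnorm ip x.
Proof. by rewrite !hnormE rnN. Qed.
Lemma CS_absRe x y : `|complex.Re (ip x y)| <= hnorm ip x * hnorm ip y.
Proof.
have h1 := CS_Re x y; have h2 := CS_Re x (- y).
rewrite ipNr ReN hnormN in h2.
by rewrite ler_norml h1 andbT lerNl.
Qed.
Lemma hnormB x y : hnorm ip (x - y) <= hnorm ip x + hnorm ip y.
Proof. by rewrite -(hnormN y); apply: hnormD. Qed.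
Lemma hnormBC x y : hnorm ip (x - y) = hnorm ip (y - x).
Proof. by rewrite -hnormN opprB. Qed.
Lemma hnorm_tri x y z : hnorm ip (x - z) <= hnorm ip (x - y) + hnorm ip (y - z).
Proof. by have := hnormD (x - y) (y - z); rewrite addrA subrK. Qed.
Lemma hnormZr (r : R) x : hnorm ip (r%:C *: x) = `|r| * hnorm ip x.
Proof. by rewrite hnormZ modcC. Qed.

Lemma ip_ext x y : (forall z, ip x z = ip y z) -> x = y.
Proof.
move=> h; apply/eqP; rewrite -subr_eq0; apply/eqP; apply: ipxx_eq0.
by rewrite ipBl h subrr.
Qed.

Lemma adjoint_lin (S S' : V -> V) : is_adjoint ip S S' -> lin_op S.
Proof.
move=> hS a x y; apply: ip_ext => z.
by rewrite hS ipDZl ipDl ipZl !hS.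
Qed.

End IP.

Section Geom.
Variable R : realType.

Lemma pow_bern (q : R) n : 0 <= q <= 1 -> q ^+ n * (1 + n%:R * (1 - q)) <= 1.
Proof.
move=> /andP[q0 q1]; elim: n => [|n IH]; first by rewrite expr0 mul0r addr0 mul1r.
have a0 : 0 <= q ^+ n by rewrite exprn_ge0.
have a1 : q ^+ n <= 1 by rewrite exprn_ile1.
rewrite exprS -natr1.
set a := q ^+ n in IH a0 a1 *; set m : R := n%:R in IH *.
have h1 : 0 <= q * (1 - a * (1 + m * (1 - q))) by rewrite mulr_ge0 // subr_ge0.
have h2 : 0 <= (1 - q) * (1 - q * a).
  rewrite mulr_ge0 ?subr_ge0 //; rewrite -[1]mulr1; exact: ler_pM.
have -> : q * a * (1 + (m + 1) * (1 - q)) = 1 - (q * (1 - a * (1 + m * (1 - q))) + (1 - q) * (1 - q * a)) by ring.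
by rewrite lerBlDr lerDl addr_ge0.
Qed.

Lemma pow_lt_eps (q e : R) : 0 <= q < 1 -> 0 < e -> exists N : nat, q ^+ N < e.
Proof.
move=> /andP[q0 q1] e0.
have d0 : 0 < e * (1 - q) by rewrite mulr_gt0 // subr_gt0.
have di : 0 < (e * (1 - q))^-1 by rewrite invr_gt0.
have hb := archi_boundP (ltW di).
set n := Num.Def.archi_bound _ in hb.
exists n.
have hq := pow_bern n ((introT andP (conj q0 (ltW q1)))).
have h2 : 1 < e * (1 + n%:R * (1 - q)).
  have : (e * (1 - q))^-1 * (e * (1 - q)) < n%:R * (e * (1 - q)).
    by rewrite ltr_pM2r.
  rewrite mulVf ?gt_eqF //. 
  have := e0; nra.
have a0 : 0 <= q ^+ n by rewrite exprn_ge0.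
have : 0 < 1 + n%:R * (1 - q) by rewrite ltr_wpDr ?mulr_ge0 ?ler0n ?subr_ge0 ?ltW.
nra.
Qed.

Lemma le_of_eps (a b : R) : (forall e, 0 < e -> a <= b + e) -> a <= b.
Proof. by move=> h; apply/ler_addgt0Pr => e /h. Qed.

End Geom.

Section Lim.
Variables (R : realType) (V : lmodType R[i]) (ip : V -> V -> R[i]).
Hypothesis Hip : inner_product ip.
Hypothesis Hcomp : hcomplete ip.
Local Notation hn := (hnorm ip).

Lemma geom_cauchy (s : nat -> V) (C q : R) : 0 <= q < 1 ->
  (forall n, hn (s n.+1 - s n) <= C * q ^+ n) ->
  exists l, hconv ip s l /\ forall n, hn (l - s n) <= C * q ^+ n / (1 - q).
Proof.
move=> /andP[q0 q1] hs.
have q1' : 0 < 1 - q by rewrite subr_gt0.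
have C0 : 0 <= C by have := hs 0%N; rewrite expr0 mulr1; apply: le_trans; apply: hnorm_ge0.
have part : forall n k, hn (s (n + k)%N - s n) <= C * (q ^+ n - q ^+ (n + k)) / (1 - q).
  move=> n; elim=> [|k IH].
    by rewrite addn0 subrr (hnorm0 Hip) subrr mulr0 mul0r.
  apply: le_trans (hnorm_tri Hip _ (s (n + k)%N) _) _.
  rewrite addnS; apply: le_trans (lerD (hs _) IH) _.
  rewrite le_eqVlt; apply/orP; left; apply/eqP.
  rewrite exprS; field; by rewrite gt_eqF.
have part2 : forall n k, hn (s (n + k)%N - s n) <= C * q ^+ n / (1 - q).
  move=> n k; apply: le_trans (part n k) _.
  apply: ler_wpM2r; first by rewrite invr_ge0 ltW.
  by apply: ler_wpM2l => //; rewrite gerBl exprn_ge0.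
have ge : forall n m, (n <= m)%N -> hn (s m - s n) <= C * q ^+ n / (1 - q).
  by move=> n m /subnKC <-; apply: part2.
have [l hl] : exists l, hconv ip s l.
  apply: Hcomp => e e0.
  have e1 : 0 < e * (1 - q) / (2 * (C + 1)).
    by rewrite divr_gt0 ?mulr_gt0 // ltr_wpDl.
  have [N hN] := pow_lt_eps (introT andP (conj q0 q1)) e1.
  exists N => m n hm hn'.
  have C1 : 0 < C + 1 by rewrite ltr_wpDl.
  have qN0 : 0 <= q ^+ N by rewrite exprn_ge0.
  have h1 : (C + 1) * q ^+ N < e * (1 - q) / 2.
    have := hN; rewrite -(ltr_pM2l C1).
    have -> : (C + 1) * (e * (1 - q) / (2 * (C + 1))) = e * (1 - q) / 2.
      by field; rewrite gt_eqF.
    by [].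
  have b : C * q ^+ N / (1 - q) < e / 2.
    rewrite ltr_pdivrMr //; nra.
  apply: le_lt_trans (hnorm_tri Hip _ (s N) _) _.
  rewrite [hn (s N - s n)](hnormBC Hip); have := ge _ _ hm; have := ge _ _ hn'. move: b; set t := C * q ^+ N / (1 - q); lra.
exists l; split => // n.
apply: le_of_eps => e e0.
have [N hN] := hl e e0.
have hm : (n <= maxn N n)%N by rewrite leq_maxr.
have hN' := hN _ (leq_maxl N n).
apply: le_trans (hnorm_tri Hip _ (s (maxn N n)) _) _.
rewrite [hn (l - s _)](hnormBC Hip); have := ge _ _ hm; move: hN'; set t := C * q ^+ n / (1 - q); lra.
Qed.

End Lim.

Section LinOp.
Variables (R : realType) (V : lmodType R[i]).
Variable (S : V -> V).
Hypothesis HS : lin_op S.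
Lemma linD x y : S (x + y) = S x + S y.
Proof. by rewrite -[x]scale1r HS !scale1r. Qed.
Lemma lin0 : S 0 = 0.
Proof. by apply: (addrI (S 0)); rewrite -linD !addr0. Qed.
Lemma linZ a x : S (a *: x) = a *: S x.
Proof. by rewrite -[a *: x]addr0 HS lin0 addr0. Qed.
Lemma linN x : S (- x) = - S x.
Proof. by rewrite -scaleN1r linZ scaleN1r. Qed.
Lemma linB x y : S (x - y) = S x - S y.
Proof. by rewrite linD linN. Qed.
End LinOp.

Section LinComb.
Variables (R : realType) (V : lmodType R[i]).
Lemma lin_id : lin_op (@id V). Proof. by []. Qed.
Lemma lin_comp (S1 S2 : V -> V) : lin_op S1 -> lin_op S2 -> lin_op (fun x => S1 (S2 x)).
Proof. by move=> h1 h2 a x y; rewrite h2 h1. Qed.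
Lemma lin_sub (S1 S2 : V -> V) : lin_op S1 -> lin_op S2 -> lin_op (fun x => S1 x - S2 x).
Proof.
move=> h1 h2 a x y; rewrite h1 h2 scalerBr opprD !addrA; congr (_ + _).
by rewrite addrAC.
Qed.
Lemma lin_scale (S1 : V -> V) (a0 : R[i]) : lin_op S1 -> lin_op (fun x => a0 *: S1 x).
Proof. by move=> h1 a x y; rewrite h1 scalerDr !scalerA mulrC. Qed.
End LinComb.

Definition subsp (R : realType) (V : lmodType R[i]) (M : set V) :=
  M 0 /\ forall (a : R[i]) x y, M x -> M y -> M (a *: x + y).

Section SubspFacts.
Variables (R : realType) (V : lmodType R[i]) (M : set V).
Hypothesis HM : subsp M.
Lemma subsp0 : M 0. Proof. by case: HM. Qed.
Lemma subspZD a x y : M x -> M y -> M (a *: x + y). Proof. by case: HM => _; apply. Qed.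
Lemma subspD x y : M x -> M y -> M (x + y).
Proof. by move=> hx hy; rewrite -[x]scale1r; apply: subspZD. Qed.
Lemma subspZ a x : M x -> M (a *: x).
Proof. by move=> hx; rewrite -[a *: x]addr0; apply: subspZD => //; apply: subsp0. Qed.
Lemma subspN x : M x -> M (- x).
Proof. by move=> hx; rewrite -scaleN1r; apply: subspZ. Qed.
Lemma subspB x y : M x -> M y -> M (x - y).
Proof. by move=> hx hy; apply: subspD => //; apply: subspN. Qed.
End SubspFacts.

Lemma range_subsp (R : realType) (V : lmodType R[i]) (S : V -> V) :
  lin_op S -> subsp (range S).
Proof.
move=> hS; split; first by exists 0 => //; exact: lin0.
by move=> a _ _ [u _ <-] [v _ <-]; exists (a *: u + v) => //; rewrite hS.
Qed.

Section Neumann.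
Variables (R : realType) (V : lmodType R[i]) (ip : V -> V -> R[i]).
Hypothesis Hip : inner_product ip.
Hypothesis Hcomp : hcomplete ip.
Local Notation hn := (hnorm ip).

Lemma neumann (M : set V) (N : V -> R) (K : V -> V) (q k1 k2 : R) (y : V) :
  hclosed ip M -> subsp M -> (forall x, M x -> M (K x)) -> lin_op K ->
  0 <= q < 1 -> 0 <= k1 -> 0 <= k2 ->
  (forall x, M x -> hn x <= k1 * N x) ->
  (forall x, M x -> N x <= k2 * hn x) ->
  (forall x, M x -> N (K x) <= q * N x) ->
  M y ->
  exists x, [/\ M x, x - K x = y & hn x <= k1 * k2 * hn y / (1 - q)].
Proof.
move=> Mcl Msub MK Klin /andP[q0 q1] k10 k20 h1 h2 hK My.
have q1' : 0 < 1 - q by rewrite subr_gt0.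
pose s n := iter n (fun z => y + K z) 0.
have sS n : s n.+1 = y + K (s n) by [].
have Ms n : M (s n).
  elim: n => [|n IH]; first exact: subsp0.
  by rewrite sS; apply: subspD => //; apply: MK.
have MD n : M (s n.+1 - s n) by apply: subspB.
have D0 : s 1 - s 0 = y by rewrite sS /= (lin0 Klin) !addr0 subr0.
have DS n : s n.+2 - s n.+1 = K (s n.+1 - s n).
  by rewrite (linB Klin) [s n.+2]sS [X in _ - X = _]sS opprD addrACA subrr add0r.
have ND n : N (s n.+1 - s n) <= q ^+ n * N y.
  elim: n => [|n IH]; first by rewrite D0 expr0 mul1r.
  rewrite DS; apply: le_trans (hK _ (MD n)) _.
  by rewrite exprS -mulrA; apply: ler_wpM2l.
have HD n : hn (s n.+1 - s n) <= k1 * N y * q ^+ n.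
  apply: le_trans (h1 _ (MD n)) _.
  by rewrite -mulrA [N y * _]mulrC; apply: ler_wpM2l.
have [l [hl hlb]] := geom_cauchy Hip Hcomp (introT andP (conj q0 q1)) HD.
have Ml : M l by apply: Mcl hl => n.
set C := k1 * N y in hlb *.
have C0 : 0 <= C.
  have := HD 0%N; rewrite expr0 mulr1; apply: le_trans; apply: hnorm_ge0.
have lb : hn l <= k1 * k2 * hn y / (1 - q).
  have := hlb 0%N; rewrite expr0 mulr1 /= subr0 => h.
  apply: le_trans h _; rewrite /C -[k1 * k2 * hn y]mulrA.
  apply: ler_wpM2r; first by rewrite invr_ge0 ltW.
  by apply: ler_wpM2l => //; exact: h2.
clearbody C.
exists l; split => //.
apply/eqP; rewrite -subr_eq0; apply/eqP; apply: (hnorm_eq0 Hip).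
apply/eqP; rewrite eq_le hnorm_ge0 andbT.
set z := l - K l - y.
set D := (C * q + k1 * q * k2 * C) / (1 - q).
have D0' : 0 <= D by rewrite /D; apply: divr_ge0; [apply: addr_ge0; repeat apply: mulr_ge0 | exact: ltW].
have bound : forall n, hn z <= D * q ^+ n.
  move=> n.
  have ez : z = (l - s n.+1) + K (s n - l).
    by rewrite /z sS (linB Klin) opprD !addrA subrK [LHS]addrAC.
  rewrite ez; apply: le_trans (hnormD Hip _ _) _.
  have b1 := hlb n.+1.
  have b2 : hn (K (s n - l)) <= k1 * q * k2 * (C * q ^+ n / (1 - q)).
    have MsL : M (s n - l) by apply: subspB.
    have e1 := h1 _ (MK _ MsL); have e2 := hK _ MsL; have e3 := h2 _ MsL.
    have e4 : hn (s n - l) <= C * q ^+ n / (1 - q) by rewrite (hnormBC Hip); exact: hlb.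
    move: e4; set W := C * q ^+ n / (1 - q) => e4; clearbody W.
    apply: le_trans e1 _; rewrite -!mulrA; apply: (ler_wpM2l k10).
    apply: le_trans e2 _; apply: (ler_wpM2l q0).
    apply: le_trans e3 _; apply: (ler_wpM2l k20); exact: e4.
  apply: le_trans (lerD b1 b2) _.
  rewrite le_eqVlt; apply/orP; left; apply/eqP; rewrite /D exprS; field.
  by rewrite gt_eqF.
apply: le_of_eps => e e0; rewrite add0r.
have D1 : 0 < D + 1 by rewrite ltr_wpDl.
have [n hn'] := pow_lt_eps (introT andP (conj q0 q1)) (divr_gt0 e0 D1).
have := bound n.
have qn0 : 0 <= q ^+ n by rewrite exprn_ge0.
have : (D + 1) * q ^+ n < e.
  by rewrite mulrC -ltr_pdivlMr.
rewrite mulrDl mul1r; clearbody D; move: (q ^+ n) qn0 => t t0; nra.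
Qed.
End Neumann.

Lemma inv_le_aux (R : realType) (P s a : R) : 0 < s -> 0 < P ->
  P^-1 <= s^-1 * a -> s <= P * a.
Proof.
move=> s0 P0 h; have := h; rewrite -(ler_pM2l (mulr_gt0 s0 P0)).
have -> : s * P * P^-1 = s by field; rewrite gt_eqF.
have -> : s * P * (s^-1 * a) = P * a by field; rewrite gt_eqF.
by [].
Qed.

Section UBP.
Variables (R : realType) (V : lmodType R[i]) (ip : V -> V -> R[i]).
Hypothesis Hip : inner_product ip.
Hypothesis Hcomp : hcomplete ip.
Local Notation hn := (hnorm ip).
Local Notation Rc := complex.Re.

Lemma cbound (A : V -> V) : lin_op A -> (forall x y, ip (A x) y = ip x (A y)) ->
  hclosed ip (range A) ->
  exists c, 0 < c /\ forall m, range A m -> hn m <= c * hn (A m).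
Proof.
move=> Alin Asa Acl.
have Msub := range_subsp Alin.
have [//|nH] := pselect (exists c : R, 0 < c /\ forall m, range A m -> hn m <= c * hn (A m)).
exfalso.
have unit : forall n : nat, exists u, [/\ range A u, hn u = 1 & hn (A u) < (4^-1) ^+ n].
  move=> n; have [//|nu] := pselect (exists u, [/\ range A u, hn u = 1 & hn (A u) < (4^-1) ^+ n]).
  exfalso; apply: nH; exists ((4 : R) ^+ n); split; first by rewrite exprn_gt0.
  move=> m Mm; have [->|m0] := eqVneq m 0.
    by rewrite (hnorm0 Hip) mulr_ge0 ?exprn_ge0 ?hnorm_ge0.
  have s0 : 0 < hn m.
    rewrite lt_def hnorm_ge0 andbT; apply/eqP => /(hnorm_eq0 Hip) h; by rewrite h eqxx in m0.
  set s := hn m in s0 *.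
  have Mu : range A ((s^-1)%:C *: m) by apply: subspZ.
  have hu : hn ((s^-1)%:C *: m) = 1 by rewrite (hnormZr Hip) gtr0_norm ?invr_gt0 // mulVf ?gt_eqF.
  have : ~ (hn (A ((s^-1)%:C *: m)) < (4^-1) ^+ n) by move=> h; apply: nu; exists ((s^-1)%:C *: m).
  move/negP; rewrite -leNgt (linZ Alin) (hnormZr Hip) gtr0_norm ?invr_gt0 //.
  rewrite exprVn; apply: inv_le_aux => //; exact: exprn_gt0.
have [u hu] := choice unit.
pose eps (x : V) n : R := if 0 <= Rc (ip x (u n)) then 1 else -1.
pose a n : R := (3^-1) ^+ n.+1.
pose xs := fix f (n : nat) : V :=
  if n is n'.+1 then f n' + ((eps (f n') n' * a n')%:C *: u n') else 0.
have xsS n : xs n.+1 = xs n + ((eps (xs n) n * a n)%:C *: u n) by [].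
have a0 n : 0 < a n by rewrite exprn_gt0 // invr_gt0.
have eps1 x n : `|eps x n| = 1 by rewrite /eps; case: ifP; rewrite ?normrN normr1.
have Mxs n : range A (xs n).
  elim: n => [|n IH]; first exact: subsp0.
  rewrite xsS; apply: subspD => //; apply: subspZ; by case: (hu n).
have step n : hn (xs n.+1 - xs n) <= 3^-1 * (3^-1) ^+ n.
  rewrite xsS addrC addKr (hnormZr Hip) normrM eps1 mul1r.
  case: (hu n) => _ -> _; rewrite mulr1 gtr0_norm // /a exprS.
  by [].
have q13 : 0 <= (3^-1 : R) < 1.
  apply/andP; split; first by rewrite invr_ge0 ler0n.
  by rewrite invf_lt1 ?ltr0n // ltr1n.
have [x [hx hxb]] := geom_cauchy Hip Hcomp q13 step.
have [y _ xAy] := Acl _ _ Mxs hx.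
have ru n : rn ip (u n) = 1 by case: (hu n) => _ h _; rewrite -(hnorm_sq Hip) h expr1n.
have hc n : a n <= `|Rc (ip (xs n.+1) (u n))|.
  rewrite xsS (ipDl Hip) (ipZl Hip) ReD (ipxx_real Hip) ReMC ReC ru mulr1 /eps.
  have := a0 n; set r := Rc (ip (xs n) (u n)); case: ifP => h an.
    by rewrite mul1r ger0_norm; lra.
  move/negbT: h; rewrite -ltNge => h.
  by rewrite mulN1r ler0_norm; lra.
have he n : a n / 2 <= `|Rc (ip x (u n))|.
  have h1 : hn (x - xs n.+1) <= a n / 2.
    apply: le_trans (hxb n.+1) _; rewrite /a exprS.
    by rewrite le_eqVlt; apply/orP; left; apply/eqP; field.
  have h2 : `|Rc (ip (x - xs n.+1) (u n))| <= a n / 2.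
    apply: le_trans (CS_absRe Hip _ _) _.
    by case: (hu n) => _ -> _; rewrite mulr1; exact: h1.
  have := hc n; rewrite (ipBl Hip) ReB in h2.
  move: h2; set r1 := Rc (ip x (u n)); set r2 := Rc (ip (xs n.+1) (u n)).
  rewrite -normrN opprB => h2 h3.
  have := ler_normB r2 (r2 - r1); rewrite opprB addrC subrK (distrC r2 r1).
  have := ler_distD r1 r2 0.
  rewrite !subr0 => hh; lra.
have hd n : `|Rc (ip x (u n))| <= hn y * (4^-1) ^+ n.
  rewrite -xAy Asa; apply: le_trans (CS_absRe Hip _ _) _.
  apply: ler_wpM2l; first exact: hnorm_ge0.
  by case: (hu n) => _ _ /ltW.
have q34 : 0 <= (3 / 4 : R) < 1.
  apply/andP; split; first by rewrite divr_ge0 ?ler0n.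
  by rewrite ltr_pdivrMr ?ltr0n // mul1r ltr_nat.
have Y0 := hnorm_ge0 ip y.
have e6 : 0 < (6 * (hn y + 1))^-1 by rewrite invr_gt0 mulr_gt0 ?ltr0n ?ltr_wpDl.
have [n hn'] := pow_lt_eps q34 e6.
have := le_trans (he n) (hd n).
have -> : (4^-1 : R) ^+ n = (3 / 4) ^+ n * (3^-1) ^+ n by rewrite -exprMn; congr (_ ^+ _); field.
rewrite /a exprS.
have t0 : 0 < (3^-1 : R) ^+ n by rewrite exprn_gt0 ?invr_gt0 ?ltr0n.
have p0 : 0 <= (3 / 4 : R) ^+ n by rewrite exprn_ge0 // divr_ge0 ?ler0n.
move: hn' t0 p0; set t := (3^-1 : R) ^+ n; set p := (3 / 4 : R) ^+ n => hp t0 p0 h.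
have hp' : 6 * (hn y + 1) * p < 1.
  by rewrite mulrC -ltr_pdivlMr ?mul1r // mulr_gt0 ?ltr0n ?ltr_wpDl.
nra.
Qed.
End UBP.

Section Polar.
Variables (R : realType) (V : lmodType R[i]) (ip : V -> V -> R[i]).
Hypothesis Hip : inner_product ip.
Local Notation Rc := complex.Re.
Local Notation Ic := complex.Im.

Lemma pos_selfadj (S : V -> V) : lin_op S -> (forall x, 0 <= ip (S x) x) ->
  forall x y, ip (S x) y = ip x (S y).
Proof.
move=> Slin Spos x y.
have Im0 z : Ic (ip (S z) z) = 0.
  by case: (ge0_realC (Spos z)) => -> _.
pose iC : R[i] := Complex 0 1.
have e1 := Im0 (x + y).
rewrite (linD Slin) (ipDl Hip) !(ipDr Hip) !ImD !Im0 in e1.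
have e2 := Im0 (x + iC *: y).
rewrite (linD Slin) (linZ Slin) (ipDl Hip) !(ipDr Hip) !(ipZl Hip) !(ipZr Hip) in e2.
rewrite mulrA mulJC !ImD ImMC !Im0 !ImM in e2.
rewrite (ipC Hip (S y) x); apply: complex_ext; rewrite ?ReJ ?ImJ.
  move: e2; rewrite !ReJ !ImJ /iC /=; lra.
move: e1; lra.
Qed.
End Polar.

Section Main.
Variables (R : realType) (V : lmodType R[i]) (ip : V -> V -> R[i]).
Hypothesis HV : hilbert ip.
Variables (A : V -> V) (B : V -> V) (T : V -> V) (lam : R[i]).
Hypothesis hAb : bounded_op ip A.
Hypothesis hA0 : nonzero_op A.
Hypothesis hAcl : hclosed ip (range A).
Hypothesis hsqrt : is_pos_sqrt ip A B.
Hypothesis hT : in_BAhalf ip B T.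
Hypothesis hlam : ((Aopnorm ip A T)%:C < `|lam|)%C.
Local Notation hn := (hnorm ip).
Local Notation Rc := complex.Re.
Local Notation M := (range A).

Let Hip : inner_product ip. Proof. by case: HV. Qed.
Let Hcomp : hcomplete ip. Proof. by case: HV. Qed.
Let Alin : lin_op A. Proof. by case: hAb. Qed.
Let Blin : lin_op B. Proof. by case: hsqrt => [[]]. Qed.
Let BB x : B (B x) = A x. Proof. by case: hsqrt. Qed.
Let Bsa x y : ip (B x) y = ip x (B y).
Proof. have hp : forall x, 0 <= ip (B x) x by case: hsqrt => _ h _; exact: h. exact (pos_selfadj Hip Blin hp x y). Qed.
Let Asa x y : ip (A x) y = ip x (A y).
Proof. by rewrite -!BB Bsa Bsa. Qed.
Let Tlin : lin_op T. Proof. by case: hT => [[]]. Qed.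
Let Msub : subsp M. Proof. exact: range_subsp. Qed.

Lemma pos_bound (S : V -> V) : bounded_op ip S ->
  exists k, 0 < k /\ forall x, hn (S x) <= k * hn x.
Proof.
case=> _ [k hk]; exists (Num.max k 1); split; first by rewrite lt_max ltr01 orbT.
move=> x; apply: le_trans (hk x) _; apply: ler_wpM2r; first exact: hnorm_ge0.
by rewrite le_max lexx.
Qed.

Let rnB x : rn ip (B x) = Rc (ip (A x) x).
Proof. by rewrite /rn -Bsa BB. Qed.
Let Anorm_hn x : Anorm ip A x = hn (B x).
Proof. by rewrite /Anorm /hnorm -/(rn ip (B x)) rnB. Qed.

Let kerAB n : A n = 0 -> B n = 0.
Proof.
move=> h; apply: (hnorm_eq0 Hip); rewrite hnormE rnB h (ip0l Hip) /=.
exact: sqrtr0.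
Qed.

Let perp m n : M m -> A n = 0 -> ip m n = 0.
Proof. by case=> u _ <- h; rewrite Asa h (ip0r Hip). Qed.

Variables (b c t : R).
Hypothesis hb0 : 0 < b.
Hypothesis hbB : forall x, hn (B x) <= b * hn x.
Hypothesis hc0 : 0 < c.
Hypothesis hcM : forall m, M m -> hn m <= c * hn (A m).
Hypothesis ht0 : 0 < t.
Hypothesis htT : forall x, hn (T x) <= t * hn x.

Let hnAB x : hn (A x) <= b * hn (B x).
Proof. by rewrite -BB; apply: hbB. Qed.
Let hnA x : hn (A x) <= b * b * hn x.
Proof. apply: le_trans (hnAB x) _; rewrite -mulrA; apply: ler_wpM2l; [exact: ltW | exact: hbB]. Qed.
Let beta := Num.max (c * b) b^-1.
Let beta_pos : 0 < beta.
Proof. by rewrite lt_max mulr_gt0. Qed.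
Let b_beta : 1 <= b * beta.
Proof. rewrite -(mulfV (negbT (gt_eqF hb0))); apply: ler_wpM2l; [exact: ltW | by rewrite le_max lexx orbT]. Qed.
Let hbeta m : M m -> hn m <= beta * hn (B m).
Proof.
move=> Mm; apply: le_trans (hcM Mm) _; apply: le_trans (_ : c * (b * hn (B m)) <= _).
  apply: ler_wpM2l; [exact: ltW | exact: hnAB].
rewrite mulrA; apply: ler_wpM2r; [exact: hnorm_ge0 | by rewrite le_max lexx].
Qed.
Let Muniq m : M m -> A m = 0 -> m = 0.
Proof.
move=> Mm h; apply: (hnorm_eq0 Hip); apply/eqP; rewrite eq_le hnorm_ge0 andbT.
by have := hcM Mm; rewrite h (hnorm0 Hip) mulr0.
Qed.

Let hn_of_rn (u v : V) (q : R) : 0 <= q -> rn ip u <= q ^+ 2 * rn ip v -> hn u <= q * hn v.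
Proof.
move=> q0 h; rewrite !hnormE; apply: le_trans (ler_wsqrtr h) _.
by rewrite sqrtrM ?sqr_ge0 // sqrtr_sqr ger0_norm.
Qed.

Let scaleC_inj (s : R) (u v : V) : s != 0 -> s%:C *: u = s%:C *: v -> u = v.
Proof.
move=> s0 h; have := congr1 (fun w => (s^-1)%:C *: w) h.
by rewrite !scalerA -rmorphM mulVf // scale1r scale1r.
Qed.

Lemma G_ex z : M z -> exists m, M m /\ A m = z.
Proof.
move=> Mz.
set s := (b * b)^-1.
have s0 : 0 < s by rewrite invr_gt0 mulr_gt0.
have sb : s * b * b = 1 by rewrite /s -mulrA mulVf // mulf_neq0 // gt_eqF.
have bb0 : 0 < beta ^+ 2 by rewrite exprn_gt0.
have sbeta : s / beta ^+ 2 <= 1.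
  have -> : s / beta ^+ 2 = ((b * beta) ^+ 2)^-1.
    by rewrite /s; field; rewrite !gt_eqF.
  rewrite invf_le1 ?exprn_gt0 ?mulr_gt0 //; exact: exprn_ege1.
set qq := 1 - s / beta ^+ 2.
have qq0 : 0 <= qq by rewrite subr_ge0.
have qq1 : qq < 1 by rewrite /qq ltrBlDr ltrDl divr_gt0.
set q := Num.sqrt qq.
have q01 : 0 <= q < 1.
  by rewrite sqrtr_ge0 /= -sqrtr1 ltr_sqrt ?ltr01.
pose K m := m - s%:C *: A m.
have Klin : lin_op K := lin_sub (@lin_id _ V) (lin_scale (s%:C) Alin).
have MK m : M m -> M (K m).
  by move=> Mm; apply: subspB => //; apply: subspZ => //; exists m.
have hK m : M m -> hn (K m) <= q * hn m.
  move=> Mm; apply: hn_of_rn; first exact: sqrtr_ge0.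
  rewrite sqr_sqrtr // /K (rnD Hip) (ipNr Hip) (ipZr Hip) (rnN Hip) (rnZ Hip) cjC ReN ReMC.
  rewrite modcC -(Asa m m) -rnB.
  set X := rn ip (B m); set Y := rn ip (A m); set r := rn ip m.
  have X0 : 0 <= X by apply: rn_ge0.
  have hY : Y <= b ^+ 2 * X.
    rewrite /Y /X -!(hnorm_sq Hip) -exprMn !expr2.
    by apply: ler_pM; rewrite ?hnorm_ge0 ?hnAB.
  have hr : r <= beta ^+ 2 * X.
    rewrite /r /X -!(hnorm_sq Hip) -exprMn !expr2.
    by apply: ler_pM; rewrite ?hnorm_ge0 ?hbeta.
  have h1 : s ^+ 2 * Y <= s * X.
    have : s ^+ 2 * Y <= s ^+ 2 * (b ^+ 2 * X) by apply: ler_wpM2l; rewrite ?sqr_ge0.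
    have -> : s ^+ 2 * (b ^+ 2 * X) = (s * b * b) * (s * X) by ring.
    by rewrite sb mul1r.
  have h2 : s / beta ^+ 2 * r <= s * X.
    have : s / beta ^+ 2 * r <= s / beta ^+ 2 * (beta ^+ 2 * X).
      by apply: ler_wpM2l => //; rewrite divr_ge0 ?ltW.
    have -> : s / beta ^+ 2 * (beta ^+ 2 * X) = s * X by field; rewrite gt_eqF.
    by [].
  rewrite /qq mulrBl mul1r real_normK ?num_real //.
  move: h1 h2; set u1 := s ^+ 2 * Y; set u2 := s / beta ^+ 2 * r; set u3 := s * X.
  lra.
have My : M (s%:C *: z) by apply: subspZ.
have h11 : forall x, M x -> hn x <= 1 * hn x by move=> x _; rewrite mul1r.
have [m [Mm hm _]] := neumann Hip Hcomp hAcl Msub MK Klin q01 ler01 ler01 h11 h11 hK My.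
exists m; split => //.
apply: (@scaleC_inj s); first by rewrite gt_eqF.
by rewrite -hm /K opprB addrC subrK.
Qed.

Let G_ex' : forall z, exists m, M z -> M m /\ A m = z.
Proof.
move=> z; have [Mz|nMz] := pselect (M z).
  by have [m hm] := G_ex Mz; exists m.
by exists 0.
Qed.
Let G : V -> V := projT1 (choice G_ex').
Let GP z : M z -> M (G z) /\ A (G z) = z.
Proof. exact: (projT2 (choice G_ex') z). Qed.
Let GM z : M z -> M (G z). Proof. by move/GP=> []. Qed.
Let AG z : M z -> A (G z) = z. Proof. by move/GP=> []. Qed.
Let AM x : M (A x). Proof. by exists x. Qed.

Let P y := G (A y).
Let PM y : M (P y). Proof. exact: GM. Qed.
Let AP y : A (P y) = A y. Proof. exact: AG. Qed.
Let BP y : B (P y) = B y.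
Proof.
apply/eqP; rewrite -subr_eq0 -(linB Blin); apply/eqP; apply: kerAB.
by rewrite (linB Alin) AP subrr.
Qed.
Let Pid m : M m -> P m = m.
Proof.
move=> Mm; apply/eqP; rewrite -subr_eq0; apply/eqP; apply: Muniq.
  by apply: subspB => //; apply: PM.
by rewrite (linB Alin) AP subrr.
Qed.
Let Plin : lin_op P.
Proof.
move=> a x y; apply/eqP; rewrite -subr_eq0; apply/eqP; apply: Muniq.
  by apply: subspB => //; apply: subspZD => //; apply: PM.
by rewrite (linB Alin) Alin AP Alin !AP subrr.
Qed.
Let ipPr m y : M m -> ip m (P y) = ip m y.
Proof.
move=> Mm; apply/eqP; rewrite -subr_eq0 -(ipBr Hip); apply/eqP; apply: perp => //.
by rewrite (linB Alin) AP subrr.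
Qed.
Let ipPl m y : M m -> ip (P y) m = ip y m.
Proof. by move=> Mm; rewrite (ipC Hip) ipPr // -(ipC Hip). Qed.
Let hnP y : hn (P y) <= c * (b * b) * hn y.
Proof.
apply: le_trans (hcM (PM y)) _; rewrite AP -mulrA; apply: ler_wpM2l; [exact: ltW | exact: hnA].
Qed.
Let GZ a z : M z -> G (a *: z) = a *: G z.
Proof.
move=> Mz; apply/eqP; rewrite -subr_eq0; apply/eqP; apply: Muniq.
  by apply: subspB => //; [apply: GM; apply: subspZ | apply: subspZ => //; apply: GM].
by rewrite (linB Alin) (linZ Alin) !AG ?subrr //; apply: subspZ.
Qed.

Variable T' : V -> V.
Hypothesis Tadj : is_adjoint ip T T'.
Hypothesis Trange : (range (fun x => T' (B x)) `<=` range B)%classic.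

Let TadjE x y : ip (T x) y = ip x (T' y). Proof. exact: Tadj. Qed.
Let Tadj' : is_adjoint ip T' T.
Proof. by move=> x y; rewrite (ipC Hip) -Tadj -(ipC Hip). Qed.
Let T'lin : lin_op T'. Proof. exact (adjoint_lin Hip Tadj'). Qed.
Let T'M m : M m -> M (T' m).
Proof.
case=> u _ <-; rewrite -BB.
have [v _ hv] : range B (T' (B (B u))) by apply: Trange; exists (B u).
rewrite -hv -BP; have [w _ <-] := PM v; rewrite -BB BB; exact: AM.
Qed.

Let Mclos m : M m -> hclosure ip M m.
Proof.
move=> Mm; exists (fun _ => m); split => // e e0; exists 0%N => n _.
by rewrite subrr (hnorm0 Hip).
Qed.
Let closM x : hclosure ip M x -> M x.
Proof. by case=> u [hu hc]; apply: hAcl hc. Qed.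

Local Notation alpha := (Aopnorm ip A T).
Let SA : set R := [set r | exists x, [/\ hclosure ip M x, Anorm ip A x = 1 & r = Anorm ip A (T x)]]%classic.

Let SA_ne : exists r, SA r.
Proof.
case: hA0 => x0 hx0.
have Mz : M (A x0) by exists x0.
have s0 : 0 < hn (B (A x0)).
  rewrite lt_def hnorm_ge0 andbT; apply/eqP => /(hnorm_eq0 Hip) h.
  have := Muniq Mz; rewrite -BB h (lin0 Blin) => /(_ erefl) h'.
  by rewrite h' eqxx in hx0.
set s := hn (B (A x0)) in s0.
exists (Anorm ip A (T ((s^-1)%:C *: A x0))); exists ((s^-1)%:C *: A x0); split => //.
  by apply: Mclos; apply: subspZ.
rewrite Anorm_hn (linZ Blin) (hnormZr Hip) gtr0_norm ?invr_gt0 // mulVf //.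
by rewrite gt_eqF.
Qed.

Let SA_ub : forall r, SA r -> r <= b * t * beta.
Proof.
move=> r [x [cx ax ->]]; have Mx := closM cx.
rewrite Anorm_hn in ax *; rewrite !Anorm_hn.
apply: le_trans (hbB _) _; rewrite -!mulrA; apply: ler_wpM2l; first exact: ltW.
apply: le_trans (htT _) _; apply: ler_wpM2l; first exact: ltW.
by have := hbeta Mx; rewrite ax mulr1.
Qed.

Let alpha_ub r : SA r -> r <= alpha.
Proof.
move=> hr; apply: sup_upper_bound => //; split; first exact: SA_ne.
by exists (b * t * beta) => y hy; apply: SA_ub.
Qed.

Let alpha_ge0 : 0 <= alpha.
Proof.
have [r hr] := SA_ne; apply: le_trans (alpha_ub hr).
by case: hr => x [_ _ ->]; rewrite Anorm_hn; apply: hnorm_ge0.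
Qed.

Let alpha_bound x : M x -> hn (B (T x)) <= alpha * hn (B x).
Proof.
move=> Mx; have [h0|hp] := eqVneq (hn (B x)) 0.
  have Bx0 := hnorm_eq0 Hip h0.
  have : A x = 0 by rewrite -BB Bx0 (lin0 Blin).
  move/(Muniq Mx) => ->; rewrite (lin0 Tlin) (lin0 Blin) (hnorm0 Hip) mulr0.
  exact: lexx.
have s0 : 0 < hn (B x) by rewrite lt_def hp hnorm_ge0.
set s := hn (B x) in s0 hp *.
have hS : SA (Anorm ip A (T ((s^-1)%:C *: x))).
  exists ((s^-1)%:C *: x); split => //.
    by apply: Mclos; apply: subspZ.
  by rewrite Anorm_hn (linZ Blin) (hnormZr Hip) gtr0_norm ?invr_gt0 // mulVf.
have := alpha_ub hS.
rewrite Anorm_hn (linZ Tlin) (linZ Blin) (hnormZr Hip) gtr0_norm ?invr_gt0 // => h.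
have := ler_wpM2l (ltW s0) h; rewrite mulrA mulfV ?gt_eqF // mul1r mulrC.
by [].
Qed.

Let alpha_lt : alpha < modc lam.
Proof. by move: hlam; rewrite normc_modc ltcR. Qed.

Let ml0 : 0 < modc lam := le_lt_trans alpha_ge0 alpha_lt.
Let lam0 : lam != 0.
Proof. by rewrite -modc_eq0 gt_eqF. Qed.
Let lamJ0 : lam^* != 0.
Proof. by rewrite -modc_eq0 modcJ gt_eqF. Qed.
Let q := alpha / modc lam.
Let q01 : 0 <= q < 1.
Proof.
by rewrite divr_ge0 ?alpha_ge0 ?ltW //= ltr_pdivrMr // mul1r.
Qed.

Let keyT' m : M m -> hn (B (G (T' m))) <= alpha * hn (B (G m)).
Proof.
move=> Mm.
have Mw : M (G (T' m)) by apply: GM; apply: T'M.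
have Mv : M (G m) by apply: GM.
set w := G (T' m) in Mw *; set v := G m in Mv *.
have e : hn (B w) ^+ 2 <= hn (B (T w)) * hn (B v).
  rewrite (hnorm_sq Hip) rnB AG; last exact: T'M.
  rewrite -{1}(AG Mm) -/v (Re_ipC Hip).
  rewrite -(TadjE w (A v)) -(BB v) -(Bsa (T w) (B v)); exact: (CS_Re Hip).
have e2 := alpha_bound Mw.
have X0 := hnorm_ge0 ip (B w); have Y0 := hnorm_ge0 ip (B v).
have := alpha_ge0.
move: e e2 X0 Y0; set X := hn (B w); set Y := hn (B v); set Z := hn (B (T w)).
move=> e e2 X0 Y0 a0.
have [->|Xp] := eqVneq X 0; first by rewrite mulr_ge0.
have Xp' : 0 < X by rewrite lt_def Xp X0.
have : X * X <= X * (alpha * Y).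
  apply: le_trans (_ : Z * Y <= _); first by rewrite -expr2.
  rewrite mulrA; apply: ler_wpM2r => //; rewrite mulrC //.
by rewrite ler_pM2l.
Qed.

Let K2 m := lam^-1 *: P (T m).
Let Rop_ex x : exists m, [/\ M m, m - K2 m = lam^-1 *: P x &
   hn m <= beta * b * hn (lam^-1 *: P x) / (1 - q)].
Proof.
have K2lin : lin_op K2 by apply: lin_scale; apply: lin_comp.
have MK2 m : M m -> M (K2 m) by move=> _; apply: subspZ.
have hK m : M m -> hn (B (K2 m)) <= q * hn (B m).
  move=> Mm; rewrite /K2 (linZ Blin) (hnormZ Hip) BP modcV /q.
  have -> : alpha / modc lam * hn (B m) = (modc lam)^-1 * (alpha * hn (B m)) by ring.
  apply: ler_wpM2l; first by rewrite invr_ge0 ltW.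
  exact: alpha_bound.
have hk1 m : M m -> hn m <= beta * hn (B m) by apply: hbeta.
have hk2 m : M m -> hn (B m) <= b * hn m by move=> _; apply: hbB.
have My : M (lam^-1 *: P x) by apply: subspZ.
exact: (@neumann _ _ _ Hip Hcomp M (fun v => hn (B v)) K2 q beta b _ hAcl Msub MK2 K2lin q01 (ltW beta_pos) (ltW hb0) hk1 hk2 hK My).
Qed.
Let Rop : V -> V := projT1 (choice Rop_ex).
Let RopP x : [/\ M (Rop x), Rop x - K2 (Rop x) = lam^-1 *: P x &
   hn (Rop x) <= beta * b * hn (lam^-1 *: P x) / (1 - q)].
Proof. exact: (projT2 (choice Rop_ex) x). Qed.
Let RopM x : M (Rop x). Proof. by case: (RopP x). Qed.
Let Rop_eq x : lam *: Rop x - P (T (Rop x)) = P x.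
Proof.
case: (RopP x) => _ h _; have := congr1 (fun w => lam *: w) h.
by rewrite /K2 scalerBr !scalerA mulfV // !scale1r.
Qed.

Let K3 m := (lam^*)^-1 *: T' m.
Let Rop'_ex y : exists m, [/\ M m, m - K3 m = (lam^*)^-1 *: P y &
   hn m <= b * (b * c) * hn ((lam^*)^-1 *: P y) / (1 - q)].
Proof.
have K3lin : lin_op K3 by apply: lin_scale.
have MK3 m : M m -> M (K3 m) by move=> Mm; apply: subspZ => //; apply: T'M.
have hK m : M m -> hn (B (G (K3 m))) <= q * hn (B (G m)).
  move=> Mm; rewrite /K3 GZ; last exact: T'M.
  rewrite (linZ Blin) (hnormZ Hip) modcV modcJ /q.
  have -> : alpha / modc lam * hn (B (G m)) = (modc lam)^-1 * (alpha * hn (B (G m))) by ring.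
  apply: ler_wpM2l; first by rewrite invr_ge0 ltW.
  exact: keyT'.
have hk1 m : M m -> hn m <= b * hn (B (G m)).
  by move=> Mm; rewrite -{1}(AG Mm) -BB; apply: hbB.
have hk2 m : M m -> hn (B (G m)) <= (b * c) * hn m.
  move=> Mm; apply: le_trans (hbB _) _; rewrite -mulrA; apply: ler_wpM2l; first exact: ltW.
  by have := hcM (GM Mm); rewrite AG.
have My : M ((lam^*)^-1 *: P y) by apply: subspZ.
exact: (@neumann _ _ _ Hip Hcomp M (fun v => hn (B (G v))) K3 q b (b * c) _ hAcl Msub MK3 K3lin q01 (ltW hb0) (mulr_ge0 (ltW hb0) (ltW hc0)) hk1 hk2 hK My).
Qed.
Let Rop' : V -> V := projT1 (choice Rop'_ex).
Let Rop'P y : [/\ M (Rop' y), Rop' y - K3 (Rop' y) = (lam^*)^-1 *: P y &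
   hn (Rop' y) <= b * (b * c) * hn ((lam^*)^-1 *: P y) / (1 - q)].
Proof. exact: (projT2 (choice Rop'_ex) y). Qed.
Let Rop'M y : M (Rop' y). Proof. by case: (Rop'P y). Qed.
Let Rop'_eq y : lam^* *: Rop' y - T' (Rop' y) = P y.
Proof.
case: (Rop'P y) => _ h _; have := congr1 (fun w => lam^* *: w) h.
by rewrite /K3 scalerBr !scalerA mulfV // !scale1r.
Qed.

Let Rop_adj : is_adjoint ip Rop Rop'.
Proof.
move=> x y.
have Mm := RopM x; have Mm' := Rop'M y.
rewrite -(ipPr y Mm) -Rop'_eq (ipBr Hip) (ipZr Hip) cjK -TadjE.
rewrite -(ipPl (T (Rop x)) Mm') -(ipZl Hip) -(ipBl Hip) Rop_eq.
by rewrite ipPl.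
Qed.

Let Roplin : lin_op Rop. Proof. exact (adjoint_lin Hip Rop_adj). Qed.

Let E1 x : A (lam *: Rop x - T (Rop x)) = A x.
Proof.
rewrite (linB Alin) -(AP (T (Rop x))) -(linB Alin) Rop_eq; exact: AP.
Qed.

Let E2 x : A (Rop (lam *: x - T x)) = A x.
Proof.
apply: (ip_ext Hip) => z.
rewrite Asa Rop_adj Asa.
have hm := Rop'_eq (A z); rewrite Pid ?AM // in hm.
move: hm; set m' := Rop' (A z) => hm.
rewrite -hm (ipBl Hip) (ipZl Hip) TadjE (ipBr Hip) (ipZr Hip) cjK.
by [].
Qed.

Lemma main_section : rhoA ip A B T lam.
Proof.
exists Rop; split.
- case: hA0 => x0 hx0; exists x0; apply/negP => /eqP h0.
  have := E1 x0; rewrite h0 (lin0 Tlin) scaler0 subr0 (lin0 Alin) => h.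
  by rewrite -h eqxx in hx0.
- split.
    split => //; exists (beta * b * (modc lam)^-1 * (c * (b * b)) / (1 - q)) => x.
    case: (RopP x) => _ _ h; apply: le_trans h _.
    rewrite (hnormZ Hip) modcV.
    have q1 : 0 < 1 - q by case/andP: q01 => _ h1; rewrite subr_gt0.
    set k := beta * b * (modc lam)^-1 / (1 - q).
    have k0 : 0 <= k.
      by rewrite /k divr_ge0 ?mulr_ge0 ?invr_ge0 ?ltW.
    have -> : beta * b * ((modc lam)^-1 * hn (P x)) / (1 - q) = k * hn (P x) by rewrite /k; ring.
    have -> : beta * b * (modc lam)^-1 * (c * (b * b)) / (1 - q) * hn x = k * (c * (b * b) * hn x).
      by rewrite /k; ring.
    by apply: ler_wpM2l.
  exists Rop'; split => // r [x _ <-].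
  have [u _ hu] := Rop'M (B x); exists (B u) => //; by rewrite BB.
- by move=> x; apply: E1.
- by move=> x; apply: E2.
Qed.
End Main.

Unset Implicit Arguments.
Local Open Scope ring_scope.

Theorem mainTheorem3 (R : realType) (V : lmodType R[i]) (ip : V -> V -> R[i])
  (HV : hilbert ip)
  (A : V -> V) (hAb : bounded_op ip A) (hApos : positive_op ip A)
  (hA0 : nonzero_op A) (hAcl : hclosed ip (range A))
  (Ahalf : V -> V) (hsqrt : is_pos_sqrt ip A Ahalf)
  (T : V -> V) (hT : in_BAhalf ip Ahalf T)
  (lam : R[i]) (hlam : ((Aopnorm ip A T)%:C < `|lam|)%C) :
  rhoA ip A Ahalf T lam.
Proof.
have Hip : inner_product ip by case: HV.
have Hcomp : hcomplete ip by case: HV.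
have [b [hb0 hbB]] : exists b, 0 < b /\ forall x, hnorm ip (Ahalf x) <= b * hnorm ip x.
  by apply: pos_bound; case: hsqrt.
have [t [ht0 htT]] : exists t, 0 < t /\ forall x, hnorm ip (T x) <= t * hnorm ip x.
  by apply: pos_bound; case: hT.
have Alin : lin_op A by case: hAb.
have Blin : lin_op Ahalf by case: hsqrt => [[]].
have BB : forall x, Ahalf (Ahalf x) = A x by case: hsqrt.
have hp : forall x, 0 <= ip (Ahalf x) x by case: hsqrt => _ h _; exact: h.
have Bsa : forall x y, ip (Ahalf x) y = ip x (Ahalf y) := pos_selfadj Hip Blin hp.
have Asa : forall x y, ip (A x) y = ip x (A y).
  by move=> x y; rewrite -!BB Bsa Bsa.
have [c [hc0 hcM]] := cbound Hip Hcomp Alin Asa hAcl.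
have [_ [T' [Tadj Trange]]] := hT.
exact: (main_section HV hAb hA0 hAcl hsqrt hT hlam hb0 hbB hc0 hcM ht0 htT Tadj Trange).
Qed.
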